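(* Let $\mathfrak M$ be a finite dimensional right $\mathbb H$-linear space of $\mathbb H^r$-valued functions, each of which is given in a neighborhood of the origin by a convergent series $f=\sum_{n\ge0}P_nf_n$ with $f_n\in\mathbb H^r$ (as is the case for functions hyperholomorphic of axial type near the origin). Then $\mathfrak M$ is invariant under $R_0:\sum_nP_nf_n\mapsto\sum_nP_nf_{n+1}$ if and only if there exist $N\in\mathbb N$ and matrices $(\mathsf C,\mathsf A)\in\mathbb H^{r\times N}\times\mathbb H^{N\times N}$ such that $\mathfrak M=\{\sum_{n\ge0}P_n\mathsf C\mathsf A^n\xi:\ \xi\in\mathbb H^N\}$. Moreover, for any such pair, $N\ge\dim\mathfrak M$, with equality if and only if the pair is observable, i.e. $\bigcap_{n\ge0}\ker\mathsf C\mathsf A^n=\{0\}$.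
   Context: For $m\ge0$, $T^m_j=\frac{2(m-j+1)}{(m+1)(m+2)}$, $c_m=\sum_{j=0}^m(-1)^jT^m_j$, $P_m(x)=\frac1{c_m}\sum_{j=0}^mT^m_jx^{m-j}\overline{x}^{\,j}$ for quaternions $x$, $\overline x$ the quaternionic conjugate. These polynomials are Fueter hyperholomorphic and a function expanded as $\sum_nP_nf_n$ determines its coefficients uniquely. *)

(* Defs.v *)
From HB Require Import structures.
From mathcomp Require Import all_boot all_order all_algebra.
From mathcomp Require Import ring.
From mathcomp Require Import all_classical all_reals all_analysis.

Set Implicit Arguments.
Unset Strict Implicit.
Unset Printing Implicit Defensive.

Import Order.TTheory GRing.Theory Num.Theory.
Import numFieldNormedType.Exports.
Local Open Scope classical_set_scope.
Local Open Scope ring_scope.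

Record quat (R : Type) := Quat { q0 : R; q1 : R; q2 : R; q3 : R }.

Section Quaternions.
Variable R : realType.

Definition quat_to (q : quat R) := (q0 q, q1 q, q2 q, q3 q).
Definition quat_of (t : R * R * R * R) :=
  let: (a, b, c, d) := t in Quat a b c d.
Lemma quat_toK : cancel quat_to quat_of. Proof. by case. Qed.

HB.instance Definition _ := Equality.copy (quat R) (can_type quat_toK).
HB.instance Definition _ := Choice.copy (quat R) (can_type quat_toK).

Definition qzero : quat R := Quat 0 0 0 0.
Definition qadd (x y : quat R) :=
  Quat (q0 x + q0 y) (q1 x + q1 y) (q2 x + q2 y) (q3 x + q3 y).
Definition qopp (x : quat R) := Quat (- q0 x) (- q1 x) (- q2 x) (- q3 x).

Lemma qaddA : associative qadd.
Proof. by case=> ? ? ? ? [? ? ? ?] [? ? ? ?]; rewrite /qadd /=; congr Quat; ring. Qed.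
Lemma qaddC : commutative qadd.
Proof. by case=> ? ? ? ? [? ? ? ?]; rewrite /qadd /=; congr Quat; ring. Qed.
Lemma qadd0 : left_id qzero qadd.
Proof. by case=> ? ? ? ?; rewrite /qadd /=; congr Quat; ring. Qed.
Lemma qaddN : left_inverse qzero qopp qadd.
Proof. by case=> ? ? ? ?; rewrite /qadd /=; congr Quat; ring. Qed.

HB.instance Definition _ := GRing.isZmodule.Build (quat R) qaddA qaddC qadd0 qaddN.

Definition qone : quat R := Quat 1 0 0 0.
(* Hamilton product: i^2 = j^2 = k^2 = ijk = -1 *)
Definition qmul (x y : quat R) :=
  Quat (q0 x * q0 y - q1 x * q1 y - q2 x * q2 y - q3 x * q3 y)
       (q0 x * q1 y + q1 x * q0 y + q2 x * q3 y - q3 x * q2 y)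
       (q0 x * q2 y - q1 x * q3 y + q2 x * q0 y + q3 x * q1 y)
       (q0 x * q3 y + q1 x * q2 y - q2 x * q1 y + q3 x * q0 y).

Lemma qmulA : associative qmul.
Proof. by case=> ? ? ? ? [? ? ? ?] [? ? ? ?]; rewrite /qmul /=; congr Quat; ring. Qed.
Lemma qmul1 : left_id qone qmul.
Proof. by case=> ? ? ? ?; rewrite /qmul /=; congr Quat; ring. Qed.
Lemma qmulr1 : right_id qone qmul.
Proof. by case=> ? ? ? ?; rewrite /qmul /=; congr Quat; ring. Qed.
Lemma qmulDl : left_distributive qmul qadd.
Proof. by case=> ? ? ? ? [? ? ? ?] [? ? ? ?]; rewrite /qmul /= /qadd /=; congr Quat; ring. Qed.
Lemma qmulDr : right_distributive qmul qadd.
Proof. by case=> ? ? ? ? [? ? ? ?] [? ? ? ?]; rewrite /qmul /= /qadd /=; congr Quat; ring. Qed.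
Lemma qone_neq0 : qone != 0.
Proof. by apply/eqP => -[] /eqP; rewrite oner_eq0. Qed.

HB.instance Definition _ := GRing.Zmodule_isNzRing.Build (quat R)
  qmulA qmul1 qmulr1 qmulDl qmulDr qone_neq0.

Definition qreal (a : R) : quat R := Quat a 0 0 0.
Definition qconj (x : quat R) : quat R := Quat (q0 x) (- q1 x) (- q2 x) (- q3 x).
Definition qnorm2 (x : quat R) : R := q0 x ^+ 2 + q1 x ^+ 2 + q2 x ^+ 2 + q3 x ^+ 2.

End Quaternions.

Notation "'H[ R ]" := (quat R) (at level 8, format "''H[' R ]").

Section Pm.
Variable R : realType.

Definition Tcoef (m j : nat) : R :=
  (2 * (m - j + 1)%:R) / ((m + 1)%:R * (m + 2)%:R).
Definition ccoef (m : nat) : R := \sum_(j < m.+1) (-1) ^+ j * Tcoef m j.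
Definition Ppoly (m : nat) (x : 'H[R]) : 'H[R] :=
  qreal (ccoef m)^-1 *
  \sum_(j < m.+1) qreal (Tcoef m j) * (x ^+ (m - j) * qconj x ^+ j).

Variable r : nat.
Definition vfun := 'H[R] -> 'cV['H[R]]_r.

Definition qvec_cvg (u : nat -> 'cV['H[R]]_r) (l : 'cV['H[R]]_r) : Prop :=
  forall i : 'I_r,
    [/\ (fun n => q0 (u n i 0)) @ \oo --> q0 (l i 0),
        (fun n => q1 (u n i 0)) @ \oo --> q1 (l i 0),
        (fun n => q2 (u n i 0)) @ \oo --> q2 (l i 0) &
        (fun n => q3 (u n i 0)) @ \oo --> q3 (l i 0)].

Definition Pseries_partial (c : nat -> 'cV['H[R]]_r) (x : 'H[R]) (N : nat)
  : 'cV['H[R]]_r := \sum_(n < N) Ppoly n x *: c n.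

Definition has_Pexpansion (f : vfun) (c : nat -> 'cV['H[R]]_r) : Prop :=
  exists2 eps : R, 0 < eps &
    forall x : 'H[R], qnorm2 x < eps -> qvec_cvg (Pseries_partial c x) (f x).

Definition germ_eq (f g : vfun) : Prop :=
  exists2 eps : R, 0 < eps & forall x : 'H[R], qnorm2 x < eps -> f x = g x.

Definition vrscale (v : 'cV['H[R]]_r) (a : 'H[R]) : 'cV['H[R]]_r :=
  \col_i (v i 0 * a).
Definition fzero : vfun := fun _ => 0.
Definition fadd (f g : vfun) : vfun := fun x => f x + g x.
Definition frscale (f : vfun) (a : 'H[R]) : vfun := fun x => vrscale (f x) a.

Definition right_subspace (M : vfun -> Prop) : Prop :=
  [/\ M fzero,
      forall f g, M f -> M g -> M (fadd f g) &
      forall f a, M f -> M (frscale f a)].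

Definition fcomb (d : nat) (b : 'I_d -> vfun) (a : 'I_d -> 'H[R]) : vfun :=
  fun x => \sum_(i < d) vrscale (b i x) (a i).

Definition is_basis (M : vfun -> Prop) (d : nat) (b : 'I_d -> vfun) : Prop :=
  [/\ forall i, M (b i),
      forall a, germ_eq (fcomb b a) fzero -> forall i, a i = 0 &
      forall f, M f -> exists a, germ_eq f (fcomb b a)].

Definition has_dim (M : vfun -> Prop) (d : nat) : Prop :=
  exists b : 'I_d -> vfun, is_basis M b.

Definition R0_invariant (M : vfun -> Prop) : Prop :=
  forall f c, M f -> has_Pexpansion f c ->
    exists2 g, M g & has_Pexpansion g (fun n => c n.+1).

Definition realized_by (M : vfun -> Prop) (N : nat)
  (C : 'M['H[R]]_(r, N)) (A : 'M['H[R]]_N) : Prop :=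
  (forall f, M f -> exists xi : 'cV['H[R]]_N,
       has_Pexpansion f (fun n => C *m (A ^+ n) *m xi)) /\
  (forall xi : 'cV['H[R]]_N, exists2 f, M f &
       has_Pexpansion f (fun n => C *m (A ^+ n) *m xi)).

Definition observable (N : nat) (C : 'M['H[R]]_(r, N)) (A : 'M['H[R]]_N) : Prop :=
  forall xi : 'cV['H[R]]_N, (forall n, C *m (A ^+ n) *m xi = 0) -> xi = 0.

End Pm.

(* Main.v *)
Require Import Defs.
From HB Require Import structures.
From mathcomp Require Import all_boot all_order all_algebra.
From mathcomp Require Import all_classical all_reals all_analysis.
From mathcomp Require Import ring lra.
Import Order.TTheory GRing.Theory Num.Theory.
Import numFieldNormedType.Exports.
Set Implicit Arguments. Unset Strict Implicit. Unset Printing Implicit Defensive.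
Local Open Scope classical_set_scope.
Local Open Scope ring_scope.

Lemma qmulE (R : realType) (x y : 'H[R]) : x * y = qmul x y.
Proof. by []. Qed.
Lemma qaddE (R : realType) (x y : 'H[R]) : x + y = qadd x y.
Proof. by []. Qed.
Lemma q0E (R : realType) : (0 : 'H[R]) = Quat 0 0 0 0.
Proof. by []. Qed.
Lemma q1E (R : realType) : (1 : 'H[R]) = Quat 1 0 0 0.
Proof. by []. Qed.
Lemma qoppE (R : realType) (x : 'H[R]) : - x = qopp x.
Proof. by []. Qed.
Lemma qrealD (R : realType) (a b : R) : qreal (a + b) = qreal a + qreal b.
Proof. rewrite qaddE /qadd /=; congr Quat; ring. Qed.
Lemma qrealM (R : realType) (a b : R) : qreal (a * b) = qreal a * qreal b.
Proof. rewrite qmulE /qmul /=; congr Quat; ring. Qed.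
Lemma qreal0 (R : realType) : qreal (0 : R) = 0.
Proof. by []. Qed.
Lemma qreal1 (R : realType) : qreal (1 : R) = 1.
Proof. by []. Qed.
Lemma qrealX (R : realType) (a : R) n : qreal a ^+ n = qreal (a ^+ n).
Proof. elim: n => [|n IH]; first by rewrite !expr0. by rewrite !exprS IH qrealM. Qed.
Lemma qconj_real (R : realType) (a : R) : qconj (qreal a) = qreal a.
Proof. by rewrite /qconj /=; congr Quat; rewrite oppr0. Qed.
Lemma qreal_sum (R : realType) (I : Type) (s : seq I) (P : pred I) (F : I -> R) :
  qreal (\sum_(i <- s | P i) F i) = \sum_(i <- s | P i) qreal (F i).
Proof. exact: (big_morph _ (@qrealD R) (qreal0 R)). Qed.

Definition kappa (R : realType) n : R := (ccoef R n)^-1 * \sum_(j < n.+1) Tcoef R n j.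

Lemma qreal_sum_ord (R : realType) n (F : 'I_n -> R) :
  qreal (\sum_(i < n) F i) = \sum_(i < n) qreal (F i).
Proof. exact: (big_morph _ (@qrealD R) (qreal0 R)). Qed.
Lemma Ppoly_real (R : realType) n (t : R) : Ppoly n (qreal t) = qreal (kappa R n * t ^+ n).
Proof.
rewrite /Ppoly /kappa qconj_real.
rewrite (eq_bigr (fun j : 'I_n.+1 => qreal (Tcoef R n j * t ^+ n))); last first.
  move=> j _; rewrite !qrealX -qrealM -exprD subnK; last by rewrite -ltnS.
  by rewrite qrealM.
rewrite -mulrA (mulr_suml _ _ _ (t ^+ n)) qrealM; congr (_ * _).
by symmetry; apply: qreal_sum_ord.
Qed.
Definition salt (R : realType) n : R := \sum_(j < n.+1) (-1) ^+ j * (n - j + 1)%:R.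
Lemma saltS (R : realType) n : salt R n.+1 = (n.+2)%:R - salt R n.
Proof.
rewrite /salt big_ord_recl /= expr0 mul1r subn0 addn1.
rewrite -sumrN; congr (_ + _); apply: eq_bigr => i _.
by rewrite /bump leq0n add1n exprS subSS mulN1r mulNr.
Qed.
Lemma salt_bnd (R : realType) n : 1 <= salt R n <= (n.+1)%:R.
Proof.
elim: n => [|n /andP[h1 h2]]; first by rewrite /salt big_ord1 expr0 mul1r lexx.
rewrite saltS.
have e : (n.+2)%:R = (n.+1)%:R + 1 :> R by rewrite -natr1.
have e0 : 0 <= (n.+1)%:R :> R by [].
rewrite e; apply/andP; split; lra.
Qed.
Lemma ccoefE (R : realType) n :
  ccoef R n = (2 / ((n + 1)%:R * (n + 2)%:R)) * salt R n.
Proof.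
rewrite /ccoef /salt mulr_sumr; apply: eq_bigr => j _; rewrite /Tcoef.
ring.
Qed.
Lemma ccoef_gt0 (R : realType) n : 0 < ccoef R n.
Proof.
rewrite ccoefE; apply: mulr_gt0; last first.
  by have /andP[h _] := salt_bnd R n; apply: lt_le_trans h.
by apply: divr_gt0 => //; apply: mulr_gt0; rewrite ltr0n addn_gt0 orbT.
Qed.
Lemma kappa_neq0 (R : realType) n : kappa R n != 0.
Proof.
rewrite /kappa mulf_neq0 //; first by rewrite invr_neq0 // gt_eqF // ccoef_gt0.
apply: lt0r_neq0; rewrite big_ord_recl; apply: ltr_pwDl; last first.
  apply: sumr_ge0 => i _; rewrite /Tcoef; apply: divr_ge0 => //.
rewrite /Tcoef subn0; apply: divr_gt0; first by apply: mulr_gt0; rewrite // ltr0n addn1.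
by apply: mulr_gt0; rewrite ltr0n addn_gt0 orbT.
Qed.
Lemma quatP (R : realType) (x y : 'H[R]) :
  q0 x = q0 y -> q1 x = q1 y -> q2 x = q2 y -> q3 x = q3 y -> x = y.
Proof. by case: x => ? ? ? ?; case: y => ? ? ? ? /= -> -> -> ->. Qed.
Lemma qnorm2_eq0 (R : realType) (x : 'H[R]) : qnorm2 x = 0 -> x = 0.
Proof.
case: x => a b c d; rewrite /qnorm2 /= => h.
have ha : a ^+ 2 = 0 by nra. have hb : b ^+ 2 = 0 by nra.
have hc : c ^+ 2 = 0 by nra. have hd : d ^+ 2 = 0 by nra.
move: ha hb hc hd => /eqP; rewrite sqrf_eq0 => /eqP ->.
move=> /eqP; rewrite sqrf_eq0 => /eqP ->.
move=> /eqP; rewrite sqrf_eq0 => /eqP ->.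
by move=> /eqP; rewrite sqrf_eq0 => /eqP ->.
Qed.
Lemma qmul_conj (R : realType) (x : 'H[R]) : x * qconj x = qreal (qnorm2 x).
Proof. case: x => a b c d; rewrite qmulE /qmul /qconj /qnorm2 /=; congr Quat; ring. Qed.
Lemma qconj_mul (R : realType) (x : 'H[R]) : qconj x * x = qreal (qnorm2 x).
Proof. case: x => a b c d; rewrite qmulE /qmul /qconj /qnorm2 /=; congr Quat; ring. Qed.
Lemma qreal_comm (R : realType) (a : R) (y : 'H[R]) : qreal a * y = y * qreal a.
Proof. case: y => ? ? ? ?; rewrite !qmulE /qmul /=; congr Quat; ring. Qed.
Definition qinv {R : realType} (x : 'H[R]) := qconj x * qreal (qnorm2 x)^-1.
Lemma qmulV (R : realType) (x : 'H[R]) : x != 0 -> x * qinv x = 1.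
Proof.
move=> nz; have nn : qnorm2 x != 0 by apply: contra nz => /eqP /qnorm2_eq0 ->.
by rewrite /qinv mulrA qmul_conj -qrealM mulfV.
Qed.
Lemma qmulVx (R : realType) (x : 'H[R]) : x != 0 -> qinv x * x = 1.
Proof.
move=> nz; have nn : qnorm2 x != 0 by apply: contra nz => /eqP /qnorm2_eq0 ->.
by rewrite /qinv -mulrA qreal_comm mulrA qconj_mul -qrealM mulfV.
Qed.
Lemma qmul_eq0r (R : realType) (x a : 'H[R]) : a != 0 -> x * a = 0 -> x = 0.
Proof. by move=> nz h; rewrite -[x]mulr1 -(qmulV nz) mulrA h mul0r. Qed.
Lemma q0D (R : realType) (x y : 'H[R]) : q0 (x + y) = q0 x + q0 y. Proof. by []. Qed.
Lemma q1D (R : realType) (x y : 'H[R]) : q1 (x + y) = q1 x + q1 y. Proof. by []. Qed.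
Lemma q2D (R : realType) (x y : 'H[R]) : q2 (x + y) = q2 x + q2 y. Proof. by []. Qed.
Lemma q3D (R : realType) (x y : 'H[R]) : q3 (x + y) = q3 x + q3 y. Proof. by []. Qed.
Lemma q0R (R : realType) r (y : 'H[R]) : q0 (qreal r * y) = r * q0 y.
Proof. rewrite qmulE /qmul /=; ring. Qed.
Lemma q1R (R : realType) r (y : 'H[R]) : q1 (qreal r * y) = r * q1 y.
Proof. rewrite qmulE /qmul /=; ring. Qed.
Lemma q2R (R : realType) r (y : 'H[R]) : q2 (qreal r * y) = r * q2 y.
Proof. rewrite qmulE /qmul /=; ring. Qed.
Lemma q3R (R : realType) r (y : 'H[R]) : q3 (qreal r * y) = r * q3 y.
Proof. rewrite qmulE /qmul /=; ring. Qed.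
Lemma dep_aux (R : realType) (m : nat) : forall n (P : pred 'I_m) (v : 'I_m -> nat -> 'H[R]),
  (n < #|P|)%N -> exists a : 'I_m -> 'H[R], (exists i, P i /\ a i != 0) /\
   forall k, (k < n)%N -> \sum_(i | P i) v i k * a i = 0.
Proof.
elim=> [|n IH] P v hc.
  have /card_gt0P [i Pi] := hc.
  exists (fun _ => 1); split; last by [].
  by exists i; split; [exact: Pi | exact: oner_neq0].
case: (pickP [pred i | P i && (v i n != 0)]) => [j /andP[Pj vj] | h0].
  set P' := [pred i | P i && (i != j)].
  have hc' : (n < #|P'|)%N.
    have := cardD1 j P; rewrite [j \in P]Pj add1n => e.
    move: hc; rewrite e ltnS; congr (_ < _)%N; apply: eq_card => i.
    by rewrite !inE andbC.
  set p := v j n.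
  have [a' [[i0 [Pi0 ai0]] Ha']] :=
    IH P' (fun i k => v i k - v j k * qinv p * v i n) hc'.
  set S := \sum_(i | P' i) v i n * a' i.
  exists (fun i => if i == j then - (qinv p * S) else a' i); split.
    exists i0; move: Pi0 => /andP[Pi0 ni0]; split => //.
    by rewrite (negbTE ni0).
  move=> k hk; rewrite (bigD1 j) //= eqxx.
  rewrite (eq_bigr (fun i => v i k * a' i)); last first.
    by move=> i /andP[_ nij]; rewrite (negbTE nij).
  move: hk; rewrite ltnS leq_eqVlt => /orP[/eqP -> | hk].
    by rewrite -/S mulrN mulrA qmulV // mul1r addNr.
  have := Ha' k hk.
  rewrite (eq_bigr (fun i => v i k * a' i - v j k * qinv p * (v i n * a' i))); last first.
    by move=> i _; rewrite mulrBl !mulrA.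
  rewrite sumrB -mulr_sumr -/S => e.
  by rewrite mulrN mulrA addrC; exact: e.
have [a [Hi Ha]] := IH P v (ltnW hc).
exists a; split => // k; rewrite ltnS leq_eqVlt => /orP[/eqP -> | hk]; last exact: Ha.
rewrite big1 // => i Pi; have := h0 i; rewrite /= Pi /= => /negbFE/eqP ->; exact: mul0r.
Qed.

Lemma vrscale_entry (R : realType) r (v : 'cV['H[R]]_r) a k l : vrscale v a k l = v k 0 * a.
Proof. by rewrite mxE. Qed.
Lemma sum_vrscaleE (R : realType) r m (v : 'I_m -> 'cV['H[R]]_r) (a : 'I_m -> 'H[R]) k l :
  (\sum_(i < m) vrscale (v i) (a i)) k l = \sum_(i < m) v i k 0 * a i.
Proof. by rewrite summxE; apply: eq_bigr => i _; rewrite mxE. Qed.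
Lemma dep_mx (R : realType) m n (v : 'I_m -> 'cV['H[R]]_n) : (n < m)%N ->
  exists a : 'I_m -> 'H[R], (exists i, a i != 0) /\ \sum_(i < m) vrscale (v i) (a i) = 0.
Proof.
move=> hnm.
pose v' i (k : nat) := if (insub k : option 'I_n) is Some k' then v i k' 0 else 0.
have hc : (n < #|(predT : pred 'I_m)|)%N by rewrite cardT size_enum_ord.
have [a [[i [_ ai]] Ha]] := @dep_aux R m n predT v' hc.
exists a; split; first by exists i.
apply/matrixP => k l; rewrite sum_vrscaleE mxE.
transitivity (\sum_(j | predT j) v' j k * a j); last exact: Ha _ (ltn_ord k).
by apply: eq_bigr => j _; rewrite /v' valK.
Qed.

Lemma geom_tail (R : realType) (q : R) k N : 0 <= q -> q <= 1/2 ->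
  \sum_(n < N) (if (k < n)%N then q ^+ n else 0) + 2 * q ^+ (maxn N k.+1) <= 2 * q ^+ k.+1.
Proof.
move=> q0 q2; elim: N => [|N IH]; first by rewrite big_ord0 add0r max0n.
rewrite big_ord_recr /=.
case: (ltnP k N) => hk.
  have e1 : maxn N.+1 k.+1 = N.+1 by apply/maxn_idPl; rewrite ltnS ltnW.
  have e2 : maxn N k.+1 = N by apply/maxn_idPl.
  rewrite e1; rewrite e2 in IH; rewrite exprS.
  have hX : 0 <= q ^+ N := exprn_ge0 _ q0.
  nra.
have e1 : maxn N.+1 k.+1 = k.+1 by apply/maxn_idPr.
have e2 : maxn N k.+1 = k.+1 by apply/maxn_idPr; apply: leq_trans hk _.
by rewrite addr0 e1; rewrite e2 in IH.
Qed.

Lemma cvg0_ev (R : realType) (u : nat -> R) : u @ \oo --> 0 ->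
  forall e : R, 0 < e -> exists N, forall n, (N <= n)%N -> `|u n| < e.
Proof.
move=> h e he; move/cvgrPdist_lt : h => /(_ e he) [N _ HN].
by exists N => n hn; have := HN n hn; rewrite sub0r normrN.
Qed.
Lemma series_uniq0 (R : realType) (dl : R) (a : nat -> R) : 0 < dl ->
  (forall t : R, 0 < t -> t ^+ 2 < dl ->
     (fun N => \sum_(n < N) a n * t ^+ n) @ \oo --> 0) ->
  forall n, a n = 0.
Proof.
move=> dl0 H; elim/ltn_ind => k IHk.
have [//|ak] := eqVneq (a k) 0; exfalso.
set al := `|a k|; have al0 : 0 < al by rewrite normr_gt0.
set m := Order.min 1 dl.
have m0 : 0 < m by rewrite lt_min ltr01 dl0.
have m1 : m <= 1 by rewrite ge_min lexx.
have m2 : m <= dl by rewrite ge_min lexx orbT.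
set t0 := m / 2.
have t00 : 0 < t0 by rewrite divr_gt0.
have t01 : t0 <= 1 / 2 by rewrite ler_pM2r // invr_gt0.
have t0d : t0 ^+ 2 < dl.
  have : t0 ^+ 2 <= t0 by rewrite expr2 ler_piMl //; lra.
  rewrite /t0; lra.
have [N0 HN0] := cvg0_ev (H t0 t00 t0d) ltr01.
set B := 2 + \sum_(j < N0) `|a j * t0 ^+ j|.
have B2 : 2 <= B by rewrite lerDl sumr_ge0.
have HB : forall n, `|a n * t0 ^+ n| <= B.
  move=> n; case: (ltnP n N0) => hn.
    rewrite /B (bigD1 (Ordinal hn)) //=.
    have : 0 <= \sum_(i < N0 | i != Ordinal hn) `|a i * t0 ^+ i| by apply: sumr_ge0.
    lra.
  have e : a n * t0 ^+ n = \sum_(j < n.+1) a j * t0 ^+ j - \sum_(j < n) a j * t0 ^+ j.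
    by rewrite big_ord_recr /= addrAC subrr add0r.
  rewrite e; apply: le_trans (ler_normB _ _) _.
  have h1 := HN0 n.+1 (leqW hn); have h2 := HN0 n hn.
  have : 0 <= \sum_(j < N0) `|a j * t0 ^+ j| by exact: sumr_ge0.
  rewrite /B; lra.
have B0 : 0 < B by lra.
set q := Order.min (1 / 2) (al * t0 ^+ k / (8 * B)).
have q0 : 0 < q.
  rewrite lt_min; apply/andP; split; first by [].
  by apply: divr_gt0; [apply: mulr_gt0; [|exact: exprn_gt0] | apply: mulr_gt0].
have q2 : q <= 1 / 2 by rewrite ge_min lexx.
have q3 : q <= al * t0 ^+ k / (8 * B) by rewrite ge_min lexx orbT.
set t := t0 * q.
have tt0 : 0 < t by apply: mulr_gt0.
have tle : t <= t0 / 2 by rewrite /t; nra.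
have td : t ^+ 2 < dl.
  apply: le_lt_trans t0d; rewrite ler_pXn2r ?nnegrE //; [lra| exact: ltW | exact: ltW].
set X := al * t ^+ k.
have X0 : 0 < X by rewrite mulr_gt0 // exprn_gt0.
have [N1 HN1] := cvg0_ev (H t tt0 td) (divr_gt0 X0 (ltr0n _ 2)).
set N := maxn N1 k.+1.
have hkN : (k < N)%N by rewrite leq_max leqnn orbT.
have HS := HN1 N (leq_maxl _ _).
move: HS; rewrite (bigD1 (Ordinal hkN)) //= => HS.
set rest := \sum_(i < N | i != Ordinal hkN) a i * t ^+ i in HS.
set G := fun n : nat => B * (if (k < n)%N then q ^+ n else 0).
have Hrest : `|rest| <= \sum_(i < N) G i.
  rewrite (bigD1 (Ordinal hkN)) //= /G ltnn mulr0 add0r.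
  apply: le_trans (ler_norm_sum _ _ _) _.
  apply: ler_sum => i hi.
  case: (ltngtP k i) => hki.
  - rewrite normrM normrX (gtr0_norm tt0) /t exprMn mulrA.
    rewrite ler_pM2r; last exact: exprn_gt0.
    by have := HB i; rewrite normrM normrX (gtr0_norm t00).
  - by rewrite IHk // mul0r normr0 mulr0.
  - by move: hi; rewrite -val_eqE /= hki eqxx.
have Hgeo := geom_tail k N (ltW q0) q2.
have HG : \sum_(i < N) G i <= 2 * B * q ^+ k.+1.
  rewrite /G -mulr_sumr.
  have : 0 <= 2 * q ^+ maxn N k.+1 by rewrite mulr_ge0 // exprn_ge0 // ltW.
  move=> h.
  have hs : \sum_(i < N) (if (k < i)%N then q ^+ i else 0) <= 2 * q ^+ k.+1 by lra.
  by rewrite [2 * B]mulrC -mulrA ler_pM2l.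
have h1 : 2 * B * q <= al * t0 ^+ k / 4.
  move: q3; rewrite ler_pdivlMr; last by rewrite mulr_gt0.
  move=> q3; lra.
have h2 : 2 * B * q ^+ k.+1 <= X / 4.
  rewrite /X /t exprMn exprS.
  have hq : 0 <= q ^+ k by rewrite exprn_ge0 // ltW.
  nra.
have hak : `|a k * t ^+ k| = X by rewrite normrM normrX (gtr0_norm tt0).
have := ler_normB (a k * t ^+ k + rest) rest.
rewrite addrK hak.
move=> hh.
move: HS Hrest HG h2 hh X0.
move: (\sum_(i < N) G i) => sG.
move: (`|a k * t ^+ k + rest|) (`|rest|) (2 * B * q ^+ k.+1) => x1 x2 x3.
clear HN1 hak; clearbody X; move: X => x0.
lra.
Qed.

Definition qcvg (R : realType) (s : nat -> 'H[R]) (l : 'H[R]) : Prop :=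
  [/\ (fun n => q0 (s n)) @ \oo --> q0 l,
      (fun n => q1 (s n)) @ \oo --> q1 l,
      (fun n => q2 (s n)) @ \oo --> q2 l &
      (fun n => q3 (s n)) @ \oo --> q3 l].

Lemma qcvg_cst (R : realType) (l : 'H[R]) : qcvg (fun _ => l) l.
Proof. by split; apply: cvg_cst. Qed.

Lemma qcvg_add (R : realType) (s s' : nat -> 'H[R]) l l' :
  qcvg s l -> qcvg s' l' -> qcvg (fun n => s n + s' n) (l + l').
Proof.
by case=> h0 h1 h2 h3 [g0 g1 g2 g3]; split; [exact: cvgD h0 g0|exact: cvgD h1 g1|
  exact: cvgD h2 g2|exact: cvgD h3 g3].
Qed.

Lemma qcvg_rmul (R : realType) (s : nat -> 'H[R]) l a :
  qcvg s l -> qcvg (fun n => s n * a) (l * a).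
Proof.
case=> h0 h1 h2 h3; split.
- exact: cvgB (cvgB (cvgB (cvgMl h0) (cvgMl h1)) (cvgMl h2)) (cvgMl h3).
- exact: cvgB (cvgD (cvgD (cvgMl h0) (cvgMl h1)) (cvgMl h2)) (cvgMl h3).
- exact: cvgD (cvgD (cvgB (cvgMl h0) (cvgMl h1)) (cvgMl h2)) (cvgMl h3).
- exact: cvgD (cvgB (cvgD (cvgMl h0) (cvgMl h1)) (cvgMl h2)) (cvgMl h3).
Qed.

Lemma rcvg_uniq (R : realType) (u : nat -> R) (l l' : R) :
  u @ \oo --> l -> u @ \oo --> l' -> l = l'.
Proof. by move=> h h'; exact: (cvg_unique (@Rhausdorff R) h h'). Qed.

Lemma qcvg_uniq (R : realType) (s : nat -> 'H[R]) l l' :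
  qcvg s l -> qcvg s l' -> l = l'.
Proof.
case=> h0 h1 h2 h3 [g0 g1 g2 g3]; apply: quatP.
- exact: rcvg_uniq h0 g0.
- exact: rcvg_uniq h1 g1.
- exact: rcvg_uniq h2 g2.
- exact: rcvg_uniq h3 g3.
Qed.

Lemma qvec_of (R : realType) r (u : nat -> 'cV['H[R]]_r) (l : 'cV['H[R]]_r) :
  (forall i, qcvg (fun n => u n i 0) (l i 0)) -> qvec_cvg u l.
Proof. by []. Qed.

Lemma partial_entry (R : realType) r (c : nat -> 'cV['H[R]]_r) x N i l :
  Pseries_partial c x N i l = \sum_(n < N) Ppoly n x * c n i 0.
Proof. by rewrite /Pseries_partial summxE; apply: eq_bigr => n _; rewrite mxE (ord1 l). Qed.

Lemma pexp_germ (R : realType) r (f g : vfun R r) c :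
  has_Pexpansion f c -> germ_eq f g -> has_Pexpansion g c.
Proof.
move=> [e1 e10 H1] [e2 e20 H2]; exists (Order.min e1 e2); first by rewrite lt_min e10 e20.
by move=> x; rewrite lt_min => /andP[h1 h2]; rewrite -(H2 x h2); exact: H1.
Qed.

Lemma pexp_eq (R : realType) r (f g : vfun R r) c :
  has_Pexpansion f c -> has_Pexpansion g c -> germ_eq f g.
Proof.
move=> [e1 e10 H1] [e2 e20 H2]; exists (Order.min e1 e2); first by rewrite lt_min e10 e20.
move=> x; rewrite lt_min => /andP[h1 h2]; apply/matrixP => i j; rewrite (ord1 j).
exact: qcvg_uniq (H1 x h1 i) (H2 x h2 i).
Qed.

Lemma pexp_zero (R : realType) r : has_Pexpansion (@fzero R r) (fun _ => 0).
Proof.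
exists 1 => // x _; apply: qvec_of => i.
have -> : (fun N => Pseries_partial (fun _ : nat => (0 : 'cV['H[R]]_r)) x N i 0) = (fun _ => 0).
  apply: funext => N; rewrite partial_entry big1 // => n _; rewrite mxE mulr0 //.
rewrite /fzero mxE; exact: qcvg_cst.
Qed.

Lemma pexp_add (R : realType) r (f g : vfun R r) c c' :
  has_Pexpansion f c -> has_Pexpansion g c' ->
  has_Pexpansion (fadd f g) (fun n => c n + c' n).
Proof.
move=> [e1 e10 H1] [e2 e20 H2]; exists (Order.min e1 e2); first by rewrite lt_min e10 e20.
move=> x; rewrite lt_min => /andP[h1 h2]; apply: qvec_of => i.
have -> : (fun N => Pseries_partial (fun n => c n + c' n) x N i 0) =
   (fun N => Pseries_partial c x N i 0 + Pseries_partial c' x N i 0).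
  apply: funext => N; rewrite !partial_entry -big_split; apply: eq_bigr => n _.
  by rewrite mxE mulrDr.
rewrite /fadd mxE; exact: qcvg_add (H1 x h1 i) (H2 x h2 i).
Qed.

Lemma pexp_rscale (R : realType) r (f : vfun R r) c a :
  has_Pexpansion f c -> has_Pexpansion (frscale f a) (fun n => vrscale (c n) a).
Proof.
move=> [e1 e10 H1]; exists e1 => // x h1; apply: qvec_of => i.
have -> : (fun N => Pseries_partial (fun n => vrscale (c n) a) x N i 0) =
   (fun N => Pseries_partial c x N i 0 * a).
  apply: funext => N; rewrite !partial_entry mulr_suml; apply: eq_bigr => n _.
  by rewrite mxE mulrA.
rewrite /frscale mxE; exact: qcvg_rmul (H1 x h1 i).
Qed.

Lemma pexp_fcomb (R : realType) r d (b : 'I_d -> vfun R r) (cb : 'I_d -> nat -> 'cV['H[R]]_r) a :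
  (forall i, has_Pexpansion (b i) (cb i)) ->
  has_Pexpansion (fcomb b a) (fun n => \sum_(i < d) vrscale (cb i n) (a i)).
Proof.
move=> H.
suff S : forall s, has_Pexpansion (fun x => \sum_(i <- s) vrscale (b i x) (a i))
                                  (fun n => \sum_(i <- s) vrscale (cb i n) (a i)).
  exact: S.
elim=> [|i s IH].
  have -> : (fun x => \sum_(i <- [::]) vrscale (b i x) (a i)) = @fzero R r.
    by apply: funext => x; rewrite big_nil.
  have -> : (fun n => \sum_(i <- [::]) vrscale (cb i n) (a i)) = fun _ => 0.
    by apply: funext => n; rewrite big_nil.
  exact: pexp_zero.
have -> : (fun x => \sum_(j <- i :: s) vrscale (b j x) (a j)) =
   fadd (frscale (b i) (a i)) (fun x => \sum_(j <- s) vrscale (b j x) (a j)).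
  by apply: funext => x; rewrite big_cons.
have -> : (fun n => \sum_(j <- i :: s) vrscale (cb j n) (a j)) =
   (fun n => vrscale (cb i n) (a i) + \sum_(j <- s) vrscale (cb j n) (a j)).
  by apply: funext => n; rewrite big_cons.
exact: pexp_add (pexp_rscale _ (H i)) IH.
Qed.

Lemma qnorm2_real (R : realType) (t : R) : qnorm2 (qreal t) = t ^+ 2.
Proof. by rewrite /qnorm2 /= expr0n /= !addr0. Qed.

Lemma proj_partial (R : realType) r (pi : 'H[R] -> R)
  (hD : forall x y, pi (x + y) = pi x + pi y) (h0 : pi 0 = 0)
  (hR : forall a y, pi (qreal a * y) = a * pi y) (c : nat -> 'cV['H[R]]_r) t N i :
  pi (Pseries_partial c (qreal t) N i 0) = \sum_(n < N) (kappa R n * pi (c n i 0)) * t ^+ n.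
Proof.
rewrite partial_entry (big_morph pi hD h0); apply: eq_bigr => n _.
by rewrite Ppoly_real hR mulrAC.
Qed.

Lemma comp_uniq (R : realType) r (pi : 'H[R] -> R)
  (hD : forall x y, pi (x + y) = pi x + pi y) (h0 : pi 0 = 0)
  (hR : forall a y, pi (qreal a * y) = a * pi y) (c c' : nat -> 'cV['H[R]]_r)
  (L : R -> R) (dl : R) i : 0 < dl ->
  (forall t, 0 < t -> t ^+ 2 < dl ->
     (fun N => pi (Pseries_partial c (qreal t) N i 0)) @ \oo --> L t /\
     (fun N => pi (Pseries_partial c' (qreal t) N i 0)) @ \oo --> L t) ->
  forall n, pi (c n i 0) = pi (c' n i 0).
Proof.
move=> d0 H n.
have := @series_uniq0 R dl (fun n => kappa R n * pi (c n i 0) - kappa R n * pi (c' n i 0)) d0 _ n.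
move=> /(_ _)/eqP; rewrite -mulrBr mulf_eq0 (negbTE (kappa_neq0 R n)) /= subr_eq0.
move=> h; apply/eqP; apply: h => t t0 td.
have [h1 h2] := H t t0 td.
have -> : (fun N => \sum_(n < N) (kappa R n * pi (c n i 0) - kappa R n * pi (c' n i 0)) * t ^+ n)
  = (fun N => pi (Pseries_partial c (qreal t) N i 0) - pi (Pseries_partial c' (qreal t) N i 0)).
  apply: funext => N; rewrite !(proj_partial hD h0 hR) -sumrB.
  by apply: eq_bigr => m _; rewrite mulrBl.
rewrite -(subrr (L t)); exact: cvgB h1 h2.
Qed.

Lemma pexp_uniq (R : realType) r (f : vfun R r) c c' :
  has_Pexpansion f c -> has_Pexpansion f c' -> c = c'.
Proof.
move=> [e1 e10 H1] [e2 e20 H2].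
set dl := Order.min e1 e2.
have d0 : 0 < dl by rewrite lt_min e10 e20.
have Hx : forall t, 0 < t -> t ^+ 2 < dl -> qnorm2 (qreal t) < e1 /\ qnorm2 (qreal t) < e2.
  by move=> t _; rewrite qnorm2_real lt_min => /andP[].
apply: funext => n; apply/matrixP => i j; rewrite (ord1 j); apply: quatP.
- apply: (@comp_uniq R r (@q0 R) (@q0D R) erefl (@q0R R) c c' (fun t => q0 (f (qreal t) i 0)) dl i d0).
  move=> t t0 td; have [h1 h2] := Hx t t0 td.
  by have [a1 _ _ _] := H1 _ h1 i; have [a2 _ _ _] := H2 _ h2 i.
- apply: (@comp_uniq R r (@q1 R) (@q1D R) erefl (@q1R R) c c' (fun t => q1 (f (qreal t) i 0)) dl i d0).
  move=> t t0 td; have [h1 h2] := Hx t t0 td.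
  by have [_ a1 _ _] := H1 _ h1 i; have [_ a2 _ _] := H2 _ h2 i.
- apply: (@comp_uniq R r (@q2 R) (@q2D R) erefl (@q2R R) c c' (fun t => q2 (f (qreal t) i 0)) dl i d0).
  move=> t t0 td; have [h1 h2] := Hx t t0 td.
  by have [_ _ a1 _] := H1 _ h1 i; have [_ _ a2 _] := H2 _ h2 i.
- apply: (@comp_uniq R r (@q3 R) (@q3D R) erefl (@q3R R) c c' (fun t => q3 (f (qreal t) i 0)) dl i d0).
  move=> t t0 td; have [h1 h2] := Hx t t0 td.
  by have [_ _ _ a1] := H1 _ h1 i; have [_ _ _ a2] := H2 _ h2 i.
Qed.

Lemma germ_sym (R : realType) r (f g : vfun R r) : germ_eq f g -> germ_eq g f.
Proof. by move=> [e e0 H]; exists e => // x hx; rewrite H. Qed.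

Lemma fcomb_in (R : realType) r (M : vfun R r -> Prop) d (b : 'I_d -> vfun R r) a :
  right_subspace M -> (forall i, M (b i)) -> M (fcomb b a).
Proof.
case=> Mz Madd Msc Mb.
suff S : forall s, M (fun x => \sum_(i <- s) vrscale (b i x) (a i)) by exact: S.
elim=> [|i s IH].
  have -> : (fun x => \sum_(i <- [::]) vrscale (b i x) (a i)) = @fzero R r.
    by apply: funext => x; rewrite big_nil.
  exact: Mz.
have -> : (fun x => \sum_(j <- i :: s) vrscale (b j x) (a j)) =
   fadd (frscale (b i) (a i)) (fun x => \sum_(j <- s) vrscale (b j x) (a j)).
  by apply: funext => x; rewrite big_cons.
by apply: Madd => //; exact: Msc.
Qed.

Lemma mx_lin (R : realType) p q m (B : 'M['H[R]]_(p, q)) (v : 'I_m -> 'cV['H[R]]_q) a :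
  B *m (\sum_(i < m) vrscale (v i) (a i)) = \sum_(i < m) vrscale (B *m v i) (a i).
Proof.
apply/matrixP => k l; rewrite (ord1 l) sum_vrscaleE mxE.
rewrite (eq_bigr (fun j => \sum_i B k j * (v i j 0 * a i))); last first.
  by move=> j _; rewrite sum_vrscaleE mulr_sumr.
rewrite exchange_big; apply: eq_bigr => i _; rewrite mxE mulr_suml.
by apply: eq_bigr => j _; rewrite mulrA.
Qed.

Lemma mul_vrscale (R : realType) p q (B : 'M['H[R]]_(p, q)) v a :
  B *m vrscale v a = vrscale (B *m v) a.
Proof.
apply/matrixP => k l; rewrite (ord1 l) !mxE mulr_suml.
by apply: eq_bigr => j _; rewrite mxE mulrA.
Qed.

Lemma vrscale0v (R : realType) q (a : 'H[R]) : vrscale (0 : 'cV['H[R]]_q) a = 0.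
Proof. by apply/matrixP => k l; rewrite !mxE mul0r. Qed.

Lemma vrscalev0 (R : realType) q (v : 'cV['H[R]]_q) : vrscale v 0 = 0.
Proof. by apply/matrixP => k l; rewrite !mxE mulr0. Qed.

Lemma col_decomp (R : realType) q (xi : 'cV['H[R]]_q) :
  xi = \sum_(j < q) vrscale (delta_mx j 0) (xi j 0).
Proof.
apply/matrixP => k l; rewrite (ord1 l) sum_vrscaleE (bigD1 k) //= mxE !eqxx mul1r.
rewrite big1 ?addr0 // => j nj; rewrite mxE eq_sym (negbTE nj) mul0r //.
Qed.

Unset Implicit Arguments.
Theorem mainTheorem9 (R : realType) (r : nat) (M : vfun R r -> Prop) :
  right_subspace M ->
  (exists d : nat, has_dim M d) ->
  (forall f, M f -> exists c, has_Pexpansion f c) ->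
  (R0_invariant M <->
     exists (N : nat) (C : 'M['H[R]]_(r, N)) (A : 'M['H[R]]_N), realized_by M C A)
  /\
  (forall (N : nat) (C : 'M['H[R]]_(r, N)) (A : 'M['H[R]]_N),
     realized_by M C A ->
     forall d : nat, has_dim M d ->
       (d <= N)%N /\ (d = N <-> observable C A)).
Proof.
move=> Msub [d0 [b0 [Mb0 Hind0 Hspan0]]] Hexp.
split.
  split.
    move=> Hinv.
    have [cb Hcb] := choice (fun i => Hexp _ (Mb0 i)).
    have : forall i, exists al : 'I_d0 -> 'H[R],
        forall n, cb i n.+1 = \sum_j vrscale (cb j n) (al j).
      move=> i; have [g Mg Hg] := Hinv _ _ (Mb0 i) (Hcb i).
      have [al Hal] := Hspan0 g Mg; exists al => n.
      have h1 := pexp_germ Hg Hal.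
      have h2 := @pexp_fcomb _ _ _ b0 cb al Hcb.
      by have := pexp_uniq h1 h2 => /(congr1 (fun c => c n)).
    move=> /choice [al Hal].
    exists d0, (\matrix_(k, i) cb i 0%N k 0), (\matrix_(j, i) al i j).
    set C := \matrix_(k, i) cb i 0%N k 0; set A := \matrix_(j, i) al i j.
    have K : forall n (xi : 'cV_d0), C *m A ^+ n *m xi = \sum_i vrscale (cb i n) (xi i 0).
      elim=> [|n IH] xi.
        rewrite expr0 mulmx1; apply/matrixP => k l; rewrite (ord1 l) sum_vrscaleE mxE.
        by apply: eq_bigr => i _; rewrite mxE.
      rewrite exprSr -mulmxE mulmxA -mulmxA IH.
      apply/matrixP => k l; rewrite (ord1 l) !sum_vrscaleE.
      transitivity (\sum_j \sum_i cb j n k 0 * (al i j * xi i 0)).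
        apply: eq_bigr => j _; rewrite mxE mulr_sumr; apply: eq_bigr => i _; by rewrite mxE.
      rewrite exchange_big; apply: eq_bigr => i _; rewrite Hal sum_vrscaleE mulr_suml.
      by apply: eq_bigr => j _; rewrite mulrA.
    split.
      move=> f Mf; have [a Ha] := Hspan0 f Mf; exists (\col_i a i).
      have -> : (fun n => C *m A ^+ n *m \col_i a i) = (fun n => \sum_i vrscale (cb i n) (a i)).
        apply: funext => n; rewrite K; apply: eq_bigr => i _; by rewrite mxE.
      exact: pexp_germ (@pexp_fcomb _ _ _ b0 cb a Hcb) (germ_sym Ha).
    move=> xi; exists (fcomb b0 (fun i => xi i 0)); first exact: fcomb_in.
    have -> : (fun n => C *m A ^+ n *m xi) = (fun n => \sum_i vrscale (cb i n) (xi i 0)).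
      by apply: funext => n; rewrite K.
    exact: pexp_fcomb.
  move=> [N [C [A [HR1 HR2]]]] f c Mf Hfc.
  have [xi Hxi] := HR1 f Mf.
  have e := pexp_uniq Hfc Hxi.
  have [g Mg Hg] := HR2 (A *m xi).
  exists g => //.
  suff -> : (fun n => c n.+1) = (fun n => C *m A ^+ n *m (A *m xi)) by [].
  apply: funext => n; rewrite e.
  by rewrite exprSr -mulmxE mulmxA -mulmxA.
move=> N C A [HR1 HR2] d [b [Mb Hind Hspan]].
have [xs Hxs] := choice (fun i => HR1 _ (Mb i)).
have L1 : forall a : 'I_d -> 'H[R],
    (forall n, C *m A ^+ n *m (\sum_i vrscale (xs i) (a i)) = 0) -> forall i, a i = 0.
  move=> a Ha; apply: Hind.
  have h := @pexp_fcomb _ _ _ b _ a Hxs.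
  have e : (fun n => \sum_i vrscale (C *m A ^+ n *m xs i) (a i)) = (fun _ => 0).
    by apply: funext => n; rewrite -mx_lin; exact: Ha.
  rewrite e in h; exact: pexp_eq h (pexp_zero R r).
have dN : (d <= N)%N.
  rewrite leqNgt; apply/negP => hNd.
  have [a [[i ai] Hs]] := dep_mx xs hNd.
  have := L1 a; rewrite Hs => /(_ (fun n => mulmx0 _ _)) /(_ i) ai0.
  by move: ai; rewrite ai0 eqxx.
split => //; split.
  move=> edN; subst N => xi Hxi.
  pose v (i : 'I_d.+1) := if unlift ord_max i is Some j then xs j else xi.
  have [a [[i0 ai0] Hs]] := dep_mx v (ltnSn d).
  rewrite big_ord_recr /= in Hs.
  have ew : forall j : 'I_d, widen_ord (leqnSn d) j = lift ord_max j.
    by move=> j; apply: val_inj => /=; rewrite /bump leqNgt ltn_ord add0n.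
  have vw : forall j : 'I_d, v (widen_ord (leqnSn d) j) = xs j.
    by move=> j; rewrite /v ew liftK.
  have vm : v ord_max = xi by rewrite /v unlift_none.
  rewrite vm in Hs.
  rewrite (eq_bigr (fun j => vrscale (xs j) (a (widen_ord (leqnSn d) j)))) in Hs; last first.
    by move=> j _; rewrite vw.
  set a' := fun j : 'I_d => a (widen_ord (leqnSn d) j).
  have Ha' : forall j, a' j = 0.
    apply: L1 => n.
    have -> : \sum_i vrscale (xs i) (a' i) = - vrscale xi (a ord_max).
      by apply/eqP; rewrite -addr_eq0; apply/eqP.
    by rewrite mulmxN mul_vrscale Hxi vrscale0v oppr0.
  have amax : a ord_max != 0.
    move: ai0; case: (unliftP ord_max i0) => [j -> | ->] //.
    by rewrite -ew; have := Ha' j; rewrite /a' => ->; rewrite eqxx.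
  move: Hs; rewrite big1; last by move=> j _; have := Ha' j; rewrite /a' => ->; rewrite vrscalev0.
  rewrite add0r => H0; apply/matrixP => k l; rewrite (ord1 l).
  have := congr1 (fun m : 'cV['H[R]]_d => m k 0) H0; rewrite !mxE => /(qmul_eq0r amax) ->.
  by [].
move=> Hobs; apply/eqP; rewrite eqn_leq dN /= leqNgt; apply/negP => hdN.
have : forall j : 'I_N, exists be : 'I_d -> 'H[R],
    forall n, C *m A ^+ n *m delta_mx j 0 = C *m A ^+ n *m (\sum_i vrscale (xs i) (be i)).
  move=> j; have [f Mf Hf] := HR2 (delta_mx j 0); have [be Hbe] := Hspan f Mf; exists be => n.
  have h1 := pexp_germ Hf Hbe.
  have h2 := @pexp_fcomb _ _ _ b _ be Hxs.
  have := pexp_uniq h1 h2 => /(congr1 (fun c => c n)) /= ->.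
  by rewrite mx_lin.
move=> /choice [be Hbe].
have [ga [[j0 gj0] Hs]] := dep_mx (fun j => \col_i be j i) hdN.
set xi := \col_j ga j.
have Hz : forall n, C *m A ^+ n *m xi = 0.
  move=> n; rewrite (col_decomp xi) mx_lin.
  rewrite (eq_bigr (fun j => vrscale (C *m A ^+ n *m (\sum_i vrscale (xs i) (be j i))) (ga j))); last first.
    by move=> j _; rewrite Hbe mxE.
  rewrite (eq_bigr (fun j => C *m A ^+ n *m vrscale (\sum_i vrscale (xs i) (be j i)) (ga j))); last first.
    by move=> j _; rewrite mul_vrscale.
  rewrite -mulmx_sumr.
  suff -> : \sum_j vrscale (\sum_i vrscale (xs i) (be j i)) (ga j) = 0 by rewrite mulmx0.
  apply/matrixP => k l; rewrite (ord1 l) sum_vrscaleE mxE.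
  transitivity (\sum_i xs i k 0 * \sum_j be j i * ga j).
    rewrite (eq_bigr (fun j => \sum_i xs i k 0 * (be j i * ga j))); last first.
      by move=> j _; rewrite sum_vrscaleE mulr_suml; apply: eq_bigr => i _; rewrite mulrA.
    by rewrite exchange_big; apply: eq_bigr => i _; rewrite mulr_sumr.
  apply: big1 => i _.
  have := congr1 (fun m : 'cV['H[R]]_d => m i 0) Hs; rewrite sum_vrscaleE mxE.
  rewrite (eq_bigr (fun j => be j i * ga j)); last by move=> j _; rewrite mxE.
  by move=> ->; rewrite mulr0.
have := Hobs xi Hz => /(congr1 (fun m : 'cV['H[R]]_N => m j0 0)); rewrite !mxE => e.
by move: gj0; rewrite e eqxx.
Qed.
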